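(* Let $X$ and $C$ be random variables with joint distribution $p(X,C)$ on finite support $\mathcal X\times\mathcal C$. For $x\in\mathcal X$ let $\mathbf x=[p(c,x)]_{c\in\mathcal C}\in[0,1]^{|\mathcal C|}$. For $x\ne y$ in $\mathcal X$ let $\pi_{x,y}:\mathcal X\to(\mathcal X\setminus\{x,y\})\cup\{z\}$ ($z\notin\mathcal X$ a new symbol) be the identity on $\mathcal X\setminus\{x,y\}$ and send $x,y$ to $z$, and let $\mathrm{MIL}(\mathbf x,\mathbf y)=I(X;C)-I(\pi_{x,y}(X);C)$. Then $$\mathrm{MIL}(\mathbf x,\mathbf y)=K_1(\mathbf x,\mathbf y)-K_2(\mathbf x,\mathbf y),$$ where $K_1(\mathbf x,\mathbf y)=k\big(\sum_{c\in\mathcal C}p(c,x),\sum_{c\in\mathcal C}p(c,y)\big)$ and $K_2(\mathbf x,\mathbf y)=\sum_{c\in\mathcal C}k(p(c,x),p(c,y))$, and $K_1$, $K_2$ are positive definite kernels on $[0,1]^{|\mathcal C|}$. Hence $\mathrm{MIL}$ is a Kreĭn kernel on $[0,1]^{|\mathcal C|}$.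
   Context: $k(a,b)=a\ln\frac{a+b}{a}+b\ln\frac{a+b}{b}=\eta(a)+\eta(b)-\eta(a+b)$ with $\eta(u)=-u\ln u$, $0\ln0=0$. $I(\cdot;\cdot)$ is mutual information. A symmetric real map $k$ on $\mathcal X\times\mathcal X$ is a positive definite kernel if $\sum_{i,j}a_ia_jk(x_i,x_j)\ge0$ for all finite choices of reals $a_i$ and points $x_i$; it is a Kreĭn kernel if it equals $k_1-k_2$ for two positive definite kernels $k_1,k_2$. *)

(* Defs.v *)
From Stdlib Require Import Reals Lra Lia.
Open Scope R_scope.

Fixpoint fsum (n : nat) (f : nat -> R) : R :=
  match n with
  | O => 0
  | S n' => fsum n' f + f n'
  end.

Definition eta (u : R) : R :=
  if Req_EM_T u 0 then 0 else - u * ln u.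

Definition kfun (a b : R) : R := eta a + eta b - eta (a + b).

Definition marg1 (M : nat) (P : nat -> nat -> R) (u : nat) : R :=
  fsum M (fun c => P u c).
Definition marg2 (N : nat) (P : nat -> nat -> R) (c : nat) : R :=
  fsum N (fun u => P u c).
Definition mutual_info (N M : nat) (P : nat -> nat -> R) : R :=
  fsum N (fun u => fsum M (fun c =>
    if Req_EM_T (P u c) 0 then 0
    else P u c * ln (P u c / (marg1 M P u * marg2 N P c)))).

Definition is_joint_pmf (n m : nat) (p : nat -> nat -> R) : Prop :=
  (forall x c, (x < n)%nat -> (c < m)%nat -> 0 <= p x c) /\
  fsum n (fun x => fsum m (fun c => p x c)) = 1.

(* pi_{x,y} : X -> (X \ {x,y}) u {z}, with the new symbol z encoded as n
   (not in X = {0..n-1}); identity elsewhere. *)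
Definition merge_map (n x y : nat) (w : nat) : nat :=
  if Nat.eqb w x then n else if Nat.eqb w y then n else w.

Definition pushforward (n x y : nat) (p : nat -> nat -> R) (u c : nat) : R :=
  fsum n (fun w => if Nat.eqb (merge_map n x y w) u then p w c else 0).

Definition MIL (n m : nat) (p : nat -> nat -> R) (x y : nat) : R :=
  mutual_info n m p - mutual_info (S n) m (pushforward n x y p).

(* Points of R^m are functions nat -> R (coordinates c < m). *)
Definition vec := nat -> R.

Definition in_unit_cube (m : nat) (v : vec) : Prop :=
  forall c, (c < m)%nat -> 0 <= v c <= 1.

Definition K1 (m : nat) (u v : vec) : R := kfun (fsum m u) (fsum m v).
Definition K2 (m : nat) (u v : vec) : R := fsum m (fun c => kfun (u c) (v c)).

Definition pos_def_kernel (D : vec -> Prop) (K : vec -> vec -> R) : Prop :=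
  (forall u v, D u -> D v -> K u v = K v u) /\
  (forall (N : nat) (a : nat -> R) (pts : nat -> vec),
     (forall i, (i < N)%nat -> D (pts i)) ->
     0 <= fsum N (fun i => fsum N (fun j => a i * a j * K (pts i) (pts j)))).

Definition krein_kernel (D : vec -> Prop) (K : vec -> vec -> R) : Prop :=
  exists K1' K2', pos_def_kernel D K1' /\ pos_def_kernel D K2' /\
    forall u v, D u -> D v -> K u v = K1' u v - K2' u v.

(* Main.v *)
Require Import Defs.
From Stdlib Require Import Reals Lra Lia.
From Coquelicot Require Import Coquelicot.
Open Scope R_scope.

Lemma fsum_ext n f g : (forall i, (i < n)%nat -> f i = g i) -> fsum n f = fsum n g.
Proof. induction n; simpl; intros H; auto. rewrite IHn by (intros; apply H; lia). rewrite H by lia. auto. Qed.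
Lemma fsum_plus n f g : fsum n (fun i => f i + g i) = fsum n f + fsum n g.
Proof. induction n; simpl; [lra|]. rewrite IHn; lra. Qed.
Lemma fsum_minus n f g : fsum n (fun i => f i - g i) = fsum n f - fsum n g.
Proof. induction n; simpl; [lra|]. rewrite IHn; lra. Qed.
Lemma fsum_scal n c f : fsum n (fun i => c * f i) = c * fsum n f.
Proof. induction n; simpl; [lra|]. rewrite IHn; lra. Qed.
Lemma fsum_opp n f : fsum n (fun i => - f i) = - fsum n f.
Proof. induction n; simpl; [lra|]. rewrite IHn; lra. Qed.
Lemma fsum_zero n : fsum n (fun _ => 0) = 0.
Proof. induction n; simpl; lra. Qed.
Lemma fsum_swap n m (f : nat -> nat -> R) :
  fsum n (fun i => fsum m (fun j => f i j)) = fsum m (fun j => fsum n (fun i => f i j)).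
Proof. induction n; simpl. now rewrite fsum_zero. rewrite IHn. now rewrite <- fsum_plus. Qed.
Lemma fsum_nonneg n f : (forall i, (i < n)%nat -> 0 <= f i) -> 0 <= fsum n f.
Proof. induction n; simpl; intros H; [lra|]. assert (0 <= f n) by (apply H; lia).
  assert (0 <= fsum n f) by (apply IHn; intros; apply H; lia). lra. Qed.
Lemma fsum_le n f g : (forall i, (i < n)%nat -> f i <= g i) -> fsum n f <= fsum n g.
Proof. induction n; simpl; intros H; [lra|]. assert (f n <= g n) by (apply H; lia).
  assert (fsum n f <= fsum n g) by (apply IHn; intros; apply H; lia). lra. Qed.
Lemma fsum_abs n f : Rabs (fsum n f) <= fsum n (fun i => Rabs (f i)).
Proof. induction n; simpl. rewrite Rabs_R0; lra.
  eapply Rle_trans. apply Rabs_triang. lra. Qed.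
Lemma fsum_term n f k : (forall i, (i < n)%nat -> 0 <= f i) -> (k < n)%nat -> f k <= fsum n f.
Proof. induction n; simpl; intros H Hk; [lia|].
  assert (0 <= fsum n f) by (apply fsum_nonneg; intros; apply H; lia).
  destruct (Nat.eq_dec k n). subst; lra.
  assert (f k <= fsum n f) by (apply IHn; [intros; apply H; lia| lia]).
  assert (0 <= f n) by (apply H; lia). lra. Qed.

Definition Qf (N : nat) (a : nat -> R) (t : nat -> R) (K : R -> R -> R) : R :=
  fsum N (fun i => fsum N (fun j => a i * a j * K (t i) (t j))).

Lemma Q_rank1 N (a t : nat -> R) (f : R -> R) :
  fsum N (fun i => fsum N (fun j => a i * a j * (f (t i) * f (t j)))) =
  (fsum N (fun i => a i * f (t i)))^2.
Proof.
  rewrite (fsum_ext _ _ (fun i => (a i * f (t i)) * fsum N (fun j => a j * f (t j)))).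
  rewrite (fsum_ext _ _ (fun i => fsum N (fun j => a j * f (t j)) * (a i * f (t i)))).
  rewrite fsum_scal. ring. intros; ring.
  intros. rewrite <- fsum_scal. apply fsum_ext. intros; ring.
Qed.

Lemma Q_bound N (a t : nat -> R) (K : R -> R -> R) c (g : R -> R) :
  0 <= c -> (forall i, (i < N)%nat -> 0 <= g (t i)) ->
  (forall i j, (i < N)%nat -> (j < N)%nat -> Rabs (K (t i) (t j)) <= c * (g (t i) * g (t j))) ->
  Rabs (Qf N a t K) <= c * (fsum N (fun i => Rabs (a i) * g (t i)))^2.
Proof.
  intros Hc Hg HK. unfold Qf.
  eapply Rle_trans. apply fsum_abs.
  apply Rle_trans with (fsum N (fun i => fsum N (fun j => c * (Rabs (a i) * Rabs (a j) * (g (t i) * g (t j)))))).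
  apply fsum_le. intros i Hi. eapply Rle_trans. apply fsum_abs. apply fsum_le. intros j Hj.
  rewrite !Rabs_mult. specialize (HK i j Hi Hj).
  assert (0 <= Rabs (a i) * Rabs (a j)) by (apply Rmult_le_pos; apply Rabs_pos).
  nra.
  simpl. rewrite (fsum_ext _ _ (fun i => c * fsum N (fun j => Rabs (a i) * Rabs (a j) * (g (t i) * g (t j))))).
  rewrite fsum_scal. rewrite (Q_rank1 N (fun i => Rabs (a i)) t g). lra.
  intros. now rewrite fsum_scal.
Qed.

Lemma fsum_derive n (f f' : nat -> R -> R) x :
  (forall i, (i < n)%nat -> derivable_pt_lim (f i) x (f' i x)) ->
  derivable_pt_lim (fun s => fsum n (fun i => f i s)) x (fsum n (fun i => f' i x)).
Proof.
  induction n; simpl; intros H.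
  apply derivable_pt_lim_const.
  apply (derivable_pt_lim_plus (fun s => fsum n (fun i => f i s)) (f n)).
  apply IHn; intros; apply H; lia. apply H; lia.
Qed.

Lemma Q_derive N (a t : nat -> R) (K K' : R -> R -> R -> R) x :
  (forall i j, (i < N)%nat -> (j < N)%nat ->
     derivable_pt_lim (fun s => K s (t i) (t j)) x (K' x (t i) (t j))) ->
  derivable_pt_lim (fun s => Qf N a t (K s)) x (Qf N a t (K' x)).
Proof.
  intros H. unfold Qf.
  apply (fsum_derive N (fun i s => fsum N (fun j => a i * a j * K s (t i) (t j)))
     (fun i x => fsum N (fun j => a i * a j * K' x (t i) (t j)))).
  intros i Hi.
  apply (fsum_derive N (fun j s => a i * a j * K s (t i) (t j))
     (fun j x => a i * a j * K' x (t i) (t j))).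
  intros j Hj. apply derivable_pt_lim_scal. auto.
Qed.

Lemma small_lim X B : 0 <= B -> (forall r, 0 < r -> - (B / r) <= X) -> 0 <= X.
Proof.
  intros HB H. destruct (Rle_lt_dec 0 X); auto.
  specialize (H (2 * (B + 1) / (- X)) ltac:(apply Rdiv_lt_0_compat; lra)).
  exfalso. unfold Rdiv in H. rewrite Rinv_mult, Rinv_inv in H.
  assert (B * (/ (2 * (B + 1)) * - X) = (-X) * (B / (2*(B+1)))) by (field; lra).
  rewrite H0 in H. assert (B / (2*(B+1)) < 1). { apply Rmult_lt_reg_r with (2*(B+1)). lra.
   field_simplify; lra. }
  nra.
Qed.
Definition Hk s r a b := s*(exp(-(r*s))/s - exp(-(r*(s+a)))/(s+a) - exp(-(r*(s+b)))/(s+b) + exp(-(r*(s+a+b)))/(s+a+b)).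
Definition Hk' s r a b := -(s*exp(-(r*s))) * ((1-exp(-(r*a)))*(1-exp(-(r*b)))).
Lemma Hk_der s a b r : 0 < s -> 0 <= a -> 0 <= b -> derivable_pt_lim (fun r => Hk s r a b) r (Hk' s r a b).
Proof.
  intros. apply is_derive_Reals. unfold Hk, Hk'.
  auto_derive. repeat split; lra.
  replace (-(r*(s+a))) with (-(r*s) + -(r*a)) by ring.
  replace (-(r*(s+b))) with (-(r*s) + -(r*b)) by ring.
  replace (-(r*(s+a+b))) with (-(r*s) + -(r*a) + -(r*b)) by ring.
  rewrite !exp_plus. field. repeat split; lra.
Qed.

Lemma Q_crank1 N (a t : nat -> R) C (f : R -> R) :
  Qf N a t (fun x y => C * (f x * f y)) = C * (fsum N (fun i => a i * f (t i)))^2.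
Proof.
  unfold Qf. rewrite <- Q_rank1. rewrite <- fsum_scal. apply fsum_ext; intros.
  rewrite <- fsum_scal. apply fsum_ext; intros. ring.
Qed.

Definition Mk s a b := a/(s+a) + b/(s+b) - (a+b)/(s+a+b).

Lemma exp_neg_bound x : 0 < x -> exp (- x) <= / x.
Proof. intros. rewrite exp_Ropp. apply Rinv_le_contravar. lra.
  assert (1 + x < exp x) by (apply exp_ineq1; lra). lra. Qed.

Lemma T_bound s r c : 0 < s -> 0 < r -> s <= c -> 0 <= s * exp (-(r*c)) / c <= / (r*s).
Proof.
  intros Hs Hr Hc. assert (0 < exp (-(r*c))) by apply exp_pos. split.
  apply Rmult_le_pos. apply Rmult_le_pos; lra. left; apply Rinv_0_lt_compat; lra.
  apply Rle_trans with (exp (-(r*c))).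
  unfold Rdiv. rewrite Rmult_comm, <- Rmult_assoc.
  assert (s * / c <= 1). { apply Rmult_le_reg_r with c. lra. rewrite Rmult_assoc, Rinv_l; lra. }
  assert (0 <= s * / c). { apply Rmult_le_pos. lra. left; apply Rinv_0_lt_compat; lra. }
  nra.
  apply Rle_trans with (exp (-(r*s))).
  destruct (Req_dec c s). subst; lra. left; apply exp_increasing. nra.
  apply exp_neg_bound. nra.
Qed.

Lemma Hk_bound s r a b : 0 < s -> 0 < r -> 0 <= a -> 0 <= b ->
  Rabs (Hk s r a b) <= 4 / (r * s) * (1 * 1).
Proof.
  intros. unfold Hk.
  replace (s * (exp (- (r * s)) / s - exp (- (r * (s + a))) / (s + a) -
       exp (- (r * (s + b))) / (s + b) + exp (- (r * (s + a + b))) / (s + a + b)))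
   with (s * exp (- (r * s)) / s - s* exp (- (r * (s + a))) / (s + a) -
       s * exp (- (r * (s + b))) / (s + b) + s * exp (- (r * (s + a + b))) / (s + a + b)) by (field; lra).
  pose proof (T_bound s r s H H0 ltac:(lra)).
  pose proof (T_bound s r (s+a) H H0 ltac:(lra)).
  pose proof (T_bound s r (s+b) H H0 ltac:(lra)).
  pose proof (T_bound s r (s+a+b) H H0 ltac:(lra)).
  replace (4 / (r*s) * (1*1)) with (4 * / (r*s)) by (field; lra).
  apply Rabs_le. lra.
Qed.

Lemma M_pd s N a t : 0 < s -> (forall i, (i < N)%nat -> 0 <= t i) -> 0 <= Qf N a t (Mk s).
Proof.
  intros Hs Ht.
  apply small_lim with (4 / s * (fsum N (fun i => Rabs (a i) * 1))^2).
  apply Rmult_le_pos. left; apply Rdiv_lt_0_compat; lra. apply pow2_ge_0.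
  intros r Hr.
  assert (E0 : Qf N a t (Mk s) = Qf N a t (Hk s 0)).
  { unfold Qf. apply fsum_ext; intros i Hi; apply fsum_ext; intros j Hj.
    f_equal. unfold Hk, Mk. rewrite !Rmult_0_l, Ropp_0, exp_0.
    pose proof (Ht i Hi); pose proof (Ht j Hj). field. repeat split; lra. }
  destruct (MVT_cor2 (fun r => Qf N a t (Hk s r)) (fun r => Qf N a t (Hk' s r)) 0 r Hr) as [c [Hc1 Hc2]].
  { intros c _. apply Q_derive. intros; apply Hk_der; auto. }
  assert (D : Qf N a t (Hk' s c) <= 0).
  { unfold Hk'. rewrite (Q_crank1 N a t (-(s*exp(-(c*s)))) (fun x => 1 - exp (-(c*x)))).
    assert (0 < exp (-(c*s))) by apply exp_pos.
    assert (0 <= (fsum N (fun i => a i * (1 - exp (- (c * t i)))))^2) by apply pow2_ge_0.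
    assert (0 <= s * exp (-(c*s)) * (fsum N (fun i => a i * (1 - exp (- (c * t i)))))^2) by (apply Rmult_le_pos; [apply Rmult_le_pos|]; lra).
    lra. }
  assert (Bd : Rabs (Qf N a t (Hk s r)) <= 4 / (r * s) * (fsum N (fun i => Rabs (a i) * 1))^2).
  { apply Q_bound with (g := fun _ => 1). left; apply Rdiv_lt_0_compat; nra.
    intros; lra. intros; apply Hk_bound; auto. }
  apply Rabs_le_between in Bd.
  replace (- (4 / s * fsum N (fun i => Rabs (a i) * 1) ^ 2 / r)) with
     (- (4 / (r * s) * fsum N (fun i => Rabs (a i) * 1) ^ 2)) by (field; lra).
  rewrite E0. nra.
Qed.

Definition Theta s a b := a*ln(s+a) + b*ln(s+b) - (a+b)*ln(s+a+b).

Lemma Theta_der s a b : 0 <= s -> 0 < a -> 0 < b -> derivable_pt_lim (fun s => Theta s a b) s (Mk s a b).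
Proof.
  intros. apply is_derive_Reals. unfold Theta, Mk.
  auto_derive. repeat split; lra. field. repeat split; lra.
Qed.

Lemma ln_le_lin x : 0 < x -> ln x <= x - 1.
Proof.
  intros. destruct (Req_dec (ln x) 0). rewrite H0. assert (x = 1).
  { rewrite <- (exp_ln x H), H0, exp_0. auto. } lra.
  pose proof (exp_ineq1 _ H0). rewrite exp_ln in H1; lra.
Qed.

Lemma ln_gap u d R : 0 < R -> 0 <= u -> 0 <= d -> 0 <= ln (R+u+d) - ln (R+u) <= d / R.
Proof.
  intros. rewrite <- ln_div by lra. split.
  rewrite <- ln_1. apply ln_le. lra. apply Rmult_le_reg_r with (R+u). lra.
  unfold Rdiv; rewrite Rmult_assoc, Rinv_l; lra.
  eapply Rle_trans. apply ln_le_lin. apply Rdiv_lt_0_compat; lra.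
  replace ((R+u+d)/(R+u) - 1) with (d/(R+u)) by (field; lra).
  unfold Rdiv. apply Rmult_le_compat_l. lra. apply Rinv_le_contravar; lra.
Qed.

Lemma Theta_bound R a b : 0 < R -> 0 < a -> 0 < b -> Rabs (Theta R a b) <= 2 / R * (a * b).
Proof.
  intros. unfold Theta.
  pose proof (ln_gap a b R H ltac:(lra) ltac:(lra)).
  pose proof (ln_gap b a R H ltac:(lra) ltac:(lra)).
  replace (R+b+a) with (R+a+b) in H3 by ring.
  replace (a * ln (R + a) + b * ln (R + b) - (a + b) * ln (R + a + b)) with
    (-(a * (ln (R+a+b) - ln (R+a)) + b * (ln (R+a+b) - ln (R+b)))) by ring.
  rewrite Rabs_Ropp. rewrite Rabs_pos_eq by nra.
  replace (2 / R * (a*b)) with (a * (b/R) + b * (a/R)) by (field; lra). nra.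
Qed.

Lemma eta_pos a : 0 < a -> eta a = - a * ln a.
Proof. intros. unfold eta. destruct (Req_EM_T a 0); [lra|auto]. Qed.

Lemma k_Theta a b : 0 < a -> 0 < b -> kfun a b = - Theta 0 a b.
Proof.
  intros. unfold kfun, Theta. rewrite !eta_pos by lra. rewrite !Rplus_0_l. ring.
Qed.

Lemma k_pd_pos N a t : (forall i, (i < N)%nat -> 0 < t i) -> 0 <= Qf N a t kfun.
Proof.
  intros Ht.
  apply small_lim with (2 * (fsum N (fun i => Rabs (a i) * t i))^2).
  apply Rmult_le_pos. lra. apply pow2_ge_0.
  intros r Hr.
  assert (E0 : Qf N a t kfun = - Qf N a t (Theta 0)).
  { unfold Qf. rewrite <- fsum_opp.
    apply fsum_ext; intros i Hi. rewrite <- fsum_opp. apply fsum_ext; intros j Hj.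
    rewrite k_Theta by auto. ring. }
  destruct (MVT_cor2 (fun s => Qf N a t (Theta s)) (fun s => Qf N a t (Mk s)) 0 r Hr) as [c [Hc1 Hc2]].
  { intros c Hc. apply Q_derive. intros; apply Theta_der; auto; lra. }
  assert (D : 0 <= Qf N a t (Mk c)).
  { apply M_pd. lra. intros; left; auto. }
  assert (Bd : Rabs (Qf N a t (Theta r)) <= 2 / r * (fsum N (fun i => Rabs (a i) * t i))^2).
  { apply Q_bound with (g := fun x => x). left; apply Rdiv_lt_0_compat; lra.
    intros; left; auto. intros; apply Theta_bound; auto. }
  apply Rabs_le_between in Bd.
  replace (- (2 * fsum N (fun i => Rabs (a i) * t i) ^ 2 / r)) with
     (- (2 / r * fsum N (fun i => Rabs (a i) * t i) ^ 2)) by (field; lra).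
  rewrite E0. nra.
Qed.

Lemma eta0 : eta 0 = 0.
Proof. unfold eta. destruct (Req_EM_T 0 0); lra. Qed.
Lemma kfun_0l b : kfun 0 b = 0.
Proof. unfold kfun. rewrite Rplus_0_l, eta0. ring. Qed.
Lemma kfun_0r a : kfun a 0 = 0.
Proof. unfold kfun. rewrite Rplus_0_r, eta0. ring. Qed.
Lemma kfun_sym a b : kfun a b = kfun b a.
Proof. unfold kfun. rewrite Rplus_comm. f_equal. f_equal. ring. Qed.

Lemma k_pd N a t : (forall i, (i < N)%nat -> 0 <= t i) -> 0 <= Qf N a t kfun.
Proof.
  intros Ht.
  set (t' := fun i => if Req_EM_T (t i) 0 then 1 else t i).
  set (a' := fun i => if Req_EM_T (t i) 0 then 0 else a i).
  replace (Qf N a t kfun) with (Qf N a' t' kfun).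
  apply k_pd_pos. intros i Hi. unfold t'. destruct (Req_EM_T (t i) 0). lra.
  specialize (Ht i Hi). lra.
  unfold Qf. apply fsum_ext; intros i Hi; apply fsum_ext; intros j Hj.
  unfold a', t'. destruct (Req_EM_T (t i) 0) as [E|E].
  rewrite E, kfun_0l. ring.
  destruct (Req_EM_T (t j) 0) as [E'|E']. rewrite E', kfun_0r. ring. auto.
Qed.

Lemma part2 m : pos_def_kernel (in_unit_cube m) (K1 m) /\
     pos_def_kernel (in_unit_cube m) (K2 m) /\
     krein_kernel (in_unit_cube m) (fun u v => K1 m u v - K2 m u v).
Proof.
  assert (P1 : pos_def_kernel (in_unit_cube m) (K1 m)).
  { split. intros; unfold K1; apply kfun_sym.
    intros N a pts Hp. change (0 <= Qf N a (fun i => fsum m (pts i)) kfun).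
    apply k_pd. intros i Hi. apply fsum_nonneg. intros c Hc. apply (Hp i Hi c Hc). }
  assert (P2 : pos_def_kernel (in_unit_cube m) (K2 m)).
  { split. intros; unfold K2; apply fsum_ext; intros; apply kfun_sym.
    intros N a pts Hp.
    replace (fsum N (fun i => fsum N (fun j => a i * a j * K2 m (pts i) (pts j))))
      with (fsum m (fun c => Qf N a (fun i => pts i c) kfun)).
    apply fsum_nonneg. intros c Hc. apply k_pd. intros i Hi. apply (Hp i Hi c Hc).
    unfold Qf, K2. rewrite fsum_swap. apply fsum_ext; intros i Hi.
    rewrite fsum_swap. apply fsum_ext; intros j Hj. rewrite <- fsum_scal. auto. }
  split; auto. split; auto.
  exists (K1 m), (K2 m). split; auto.
Qed.

Definition psi (x : R) := x * ln x.
Lemma eta_psi u : eta u = - psi u.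
Proof. unfold eta, psi. destruct (Req_EM_T u 0). subst; ring. ring. Qed.
Lemma psi0 : psi 0 = 0.
Proof. unfold psi; ring. Qed.
Lemma kfun_psi a b : kfun a b = psi (a+b) - psi a - psi b.
Proof. unfold kfun; rewrite !eta_psi; ring. Qed.

Lemma MI_formula N M P : (forall u c, (u < N)%nat -> (c < M)%nat -> 0 <= P u c) ->
  mutual_info N M P = fsum N (fun u => fsum M (fun c => psi (P u c)))
     - fsum N (fun u => psi (marg1 M P u)) - fsum M (fun c => psi (marg2 N P c)).
Proof.
  intros HP. unfold mutual_info.
  rewrite (fsum_ext N _ (fun u => fsum M (fun c => psi (P u c)) - fsum M (fun c => P u c * ln (marg1 M P u))
        - fsum M (fun c => P u c * ln (marg2 N P c)))).
  rewrite !fsum_minus.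
  assert (E1 : fsum N (fun u => fsum M (fun c => P u c * ln (marg1 M P u))) = fsum N (fun u => psi (marg1 M P u))).
  { apply fsum_ext; intros u Hu. rewrite (fsum_ext M (fun c => P u c * ln (marg1 M P u)) (fun c => ln (marg1 M P u) * P u c)) by (intros; ring).
    rewrite fsum_scal. unfold psi, marg1. rewrite Rmult_comm; reflexivity. }
  assert (E2 : fsum N (fun u => fsum M (fun c => P u c * ln (marg2 N P c))) = fsum M (fun c => psi (marg2 N P c))).
  { rewrite fsum_swap. apply fsum_ext; intros c Hc.
    rewrite (fsum_ext N (fun u => P u c * ln (marg2 N P c)) (fun u => ln (marg2 N P c) * P u c)) by (intros; ring).
    rewrite fsum_scal. unfold psi, marg2. rewrite Rmult_comm; reflexivity. }
  rewrite E1, E2. ring.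
  intros u Hu. rewrite <- !fsum_minus. apply fsum_ext; intros c Hc.
  destruct (Req_EM_T (P u c) 0) as [E|E]. rewrite E, psi0. ring.
  assert (Hp : 0 < P u c) by (pose proof (HP u c Hu Hc); lra).
  assert (H1 : P u c <= marg1 M P u).
  { unfold marg1. apply (fsum_term M (fun c => P u c)). intros; apply HP; auto. auto. }
  assert (H2 : P u c <= marg2 N P c).
  { unfold marg2. apply (fsum_term N (fun u => P u c)). intros; apply HP; auto. auto. }
  rewrite ln_div, ln_mult by (try apply Rmult_lt_0_compat; lra). unfold psi. ring.
Qed.

Lemma fsum_ind1 n (f : nat -> R) u : (u < n)%nat -> fsum n (fun w => if Nat.eqb w u then f w else 0) = f u.
Proof.
  induction n; simpl; intros H. lia.
  destruct (Nat.eq_dec u n). subst. rewrite Nat.eqb_refl.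
  rewrite (fsum_ext _ _ (fun _ => 0)). rewrite fsum_zero. ring.
  intros i Hi. destruct (Nat.eqb_spec i n); [lia|auto].
  rewrite IHn by lia. destruct (Nat.eqb_spec n u); [lia|ring].
Qed.

Lemma fsum_replace2 n x y (h h' : nat -> R) : (x < n)%nat -> (y < n)%nat -> x <> y ->
  (forall u, (u < n)%nat -> u <> x -> u <> y -> h' u = h u) ->
  fsum n h' = fsum n h - h x - h y + h' x + h' y.
Proof.
  intros Hx Hy Hxy H.
  rewrite (fsum_ext n h' (fun u => h u + ((if Nat.eqb u x then h' u - h u else 0) + (if Nat.eqb u y then h' u - h u else 0)))).
  rewrite !fsum_plus. rewrite (fsum_ind1 n (fun u => h' u - h u) x Hx).
  rewrite (fsum_ind1 n (fun u => h' u - h u) y Hy). ring.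
  intros u Hu. destruct (Nat.eqb_spec u x); destruct (Nat.eqb_spec u y); subst; try lia.
  ring. ring. rewrite H by auto. ring.
Qed.

Section Push.
Variables (n m : nat) (p : nat -> nat -> R) (x y : nat).
Hypotheses (Hx : (x < n)%nat) (Hy : (y < n)%nat) (Hxy : x <> y).

Lemma Q_other u c : (u < n)%nat -> u <> x -> u <> y -> pushforward n x y p u c = p u c.
Proof.
  intros. unfold pushforward. rewrite <- (fsum_ind1 n (fun w => p w c) u H).
  apply fsum_ext; intros w Hw. unfold merge_map.
  destruct (Nat.eqb_spec w x); destruct (Nat.eqb_spec w y); subst;
  repeat (match goal with |- context [Nat.eqb ?a ?b] => destruct (Nat.eqb_spec a b) end); try lia; auto.
Qed.

Lemma Q_xy u c : u = x \/ u = y -> pushforward n x y p u c = 0.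
Proof.
  intros Hu. unfold pushforward. transitivity (fsum n (fun _ => 0)); [|apply fsum_zero]. apply fsum_ext; intros w Hw. unfold merge_map.
  destruct Hu; subst u;
  destruct (Nat.eqb_spec w x); destruct (Nat.eqb_spec w y); subst;
  repeat (match goal with |- context [Nat.eqb ?a ?b] => destruct (Nat.eqb_spec a b) end); try lia; auto.
Qed.

Lemma Q_n c : pushforward n x y p n c = p x c + p y c.
Proof.
  unfold pushforward. rewrite <- (fsum_ind1 n (fun w => p w c) x Hx), <- (fsum_ind1 n (fun w => p w c) y Hy).
  rewrite <- fsum_plus. apply fsum_ext; intros w Hw. unfold merge_map.
  destruct (Nat.eqb_spec w x); destruct (Nat.eqb_spec w y); subst;
  repeat (match goal with |- context [Nat.eqb ?a ?b] => destruct (Nat.eqb_spec a b) end); try lia; ring.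
Qed.
End Push.

Lemma fsum_S n f : fsum (S n) f = fsum n f + f n.
Proof. reflexivity. Qed.

Lemma part1 n m p x y : is_joint_pmf n m p -> (x < n)%nat -> (y < n)%nat -> x <> y ->
     MIL n m p x y = K1 m (p x) (p y) - K2 m (p x) (p y).
Proof.
  intros [Hp _] Hx Hy Hxy. unfold MIL.
  set (Q := pushforward n x y p).
  assert (HQ : forall u c, (u < S n)%nat -> (c < m)%nat -> 0 <= Q u c).
  { intros u c Hu Hc. destruct (Nat.eq_dec u n). subst u. unfold Q. rewrite Q_n by auto.
    pose proof (Hp x c Hx Hc); pose proof (Hp y c Hy Hc); lra.
    destruct (Nat.eq_dec u x). unfold Q; rewrite Q_xy by auto; lra.
    destruct (Nat.eq_dec u y). unfold Q; rewrite Q_xy by auto; lra.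
    unfold Q; rewrite Q_other by (auto; lia). apply Hp; lia. }
  rewrite (MI_formula n m p) by auto. rewrite (MI_formula (S n) m Q) by auto.
  assert (EA : fsum (S n) (fun u => fsum m (fun c => psi (Q u c))) =
     fsum n (fun u => fsum m (fun c => psi (p u c))) - fsum m (fun c => psi (p x c))
     - fsum m (fun c => psi (p y c)) + fsum m (fun c => psi (p x c + p y c))).
  { rewrite fsum_S. rewrite (fsum_replace2 n x y (fun u => fsum m (fun c => psi (p u c)))) by
      (auto; intros; apply fsum_ext; intros; unfold Q; rewrite Q_other; auto).
    assert (Z : forall u, u = x \/ u = y -> fsum m (fun c => psi (Q u c)) = 0).
    { intros u Hu. transitivity (fsum m (fun _ => 0)); [|apply fsum_zero]. apply fsum_ext; intros.
      unfold Q; rewrite Q_xy by auto. apply psi0. }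
    rewrite (Z x), (Z y) by auto.
    rewrite (fsum_ext m (fun c => psi (Q n c)) (fun c => psi (p x c + p y c))) by
      (intros; unfold Q; rewrite Q_n; auto). ring. }
  assert (EB : fsum (S n) (fun u => psi (marg1 m Q u)) =
     fsum n (fun u => psi (marg1 m p u)) - psi (marg1 m p x) - psi (marg1 m p y)
     + psi (marg1 m p x + marg1 m p y)).
  { rewrite fsum_S. rewrite (fsum_replace2 n x y (fun u => psi (marg1 m p u))) by
      (auto; intros; unfold marg1; f_equal; apply fsum_ext; intros; unfold Q; rewrite Q_other; auto).
    assert (Z : forall u, u = x \/ u = y -> psi (marg1 m Q u) = 0).
    { intros u Hu. unfold marg1. rewrite <- psi0. f_equal.
      transitivity (fsum m (fun _ => 0)); [|apply fsum_zero]. apply fsum_ext; intros.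
      unfold Q; rewrite Q_xy by auto. auto. }
    rewrite (Z x), (Z y) by auto.
    assert (marg1 m Q n = marg1 m p x + marg1 m p y).
    { unfold marg1. rewrite <- fsum_plus. apply fsum_ext; intros. unfold Q; rewrite Q_n; auto. }
    rewrite H. ring. }
  assert (EC : fsum m (fun c => psi (marg2 (S n) Q c)) = fsum m (fun c => psi (marg2 n p c))).
  { apply fsum_ext; intros c Hc. f_equal. unfold marg2. rewrite fsum_S.
    rewrite (fsum_replace2 n x y (fun u => p u c)) by
      (auto; intros; unfold Q; rewrite Q_other; auto).
    unfold Q. rewrite !Q_xy by auto. rewrite Q_n by auto. ring. }
  rewrite EA, EB, EC.
  unfold K1, K2. rewrite kfun_psi.
  rewrite (fsum_ext m (fun c => kfun (p x c) (p y c)) (fun c => psi (p x c + p y c) - psi (p x c) - psi (p y c))) by (intros; apply kfun_psi).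
  rewrite !fsum_minus.
  change (fsum m (p x)) with (marg1 m p x). change (fsum m (p y)) with (marg1 m p y).
  ring.
Qed.

Theorem theorem4 :
  (forall (n m : nat) (p : nat -> nat -> R) (x y : nat),
     is_joint_pmf n m p -> (x < n)%nat -> (y < n)%nat -> x <> y ->
     MIL n m p x y = K1 m (p x) (p y) - K2 m (p x) (p y)) /\
  (forall m : nat,
     pos_def_kernel (in_unit_cube m) (K1 m) /\
     pos_def_kernel (in_unit_cube m) (K2 m) /\
     krein_kernel (in_unit_cube m) (fun u v => K1 m u v - K2 m u v)).
Proof. split. exact part1. exact part2. Qed.
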